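(* Let $t\in(0,1)$ and $\gamma>0$, and let $v_\gamma(z)=(1-|z|)^\gamma$ for $z\in\mathbb{D}$. (i) If $\gamma\ge1$, then $\|C_t\|_{H^\infty_{v_\gamma}\to H^\infty_{v_\gamma}}=1$. (ii) If $\gamma\in(0,1)$, then $\|C_t\|_{H^\infty_{v_\gamma}\to H^\infty_{v_\gamma}}\le\min\{-\frac{\log(1-t)}{t},\frac{1}{\gamma}\}$.
   Context: $\mathbb{D}=\{z\in\mathbb{C}:|z|<1\}$ and $H(\mathbb{D})$ is the space of holomorphic functions on $\mathbb{D}$. For a weight $v$ (continuous non-increasing $v\colon[0,1)\to(0,\infty)$, with $v(z):=v(|z|)$), $H^\infty_v=\{f\in H(\mathbb{D}):\|f\|_{\infty,v}:=\sup_{z\in\mathbb{D}}|f(z)|v(z)<\infty\}$ with norm $\|\cdot\|_{\infty,v}$. For $t\in[0,1]$ the generalized Cesàro operator $C_t$ is defined on $f\in H(\mathbb{D})$ by $C_tf(0)=f(0)$ and $C_tf(z)=\frac{1}{z}\int_0^z\frac{f(\xi)}{1-t\xi}\,d\xi$ for $z\in\mathbb{D}\setminus\{0\}$. *)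

(* Defs.v *)
From Stdlib Require Import Reals.
From Coquelicot Require Import Coquelicot.
Open Scope R_scope.

Definition in_disc (z : C) : Prop := Cmod z < 1.

Definition holo_disc (f : C -> C) : Prop :=
  forall z : C, in_disc z -> @ex_derive C_AbsRing C_NormedModule f z.

Definition v_gamma (gamma : R) (z : C) : R := Rpower (1 - Cmod z) gamma.

Definition weighted_sup (v : C -> R) (f : C -> C) : Rbar :=
  Lub_Rbar (fun x => exists z, in_disc z /\ x = Cmod (f z) * v z).

Definition in_Hv (v : C -> R) (f : C -> C) : Prop :=
  holo_disc f /\ is_finite (weighted_sup v f).

(* generalized Cesaro operator: C_t f(0) = f(0) and, for z <> 0,
   C_t f(z) = (1/z) int_0^z f(xi)/(1-t xi) dxi, where the complex line
   integral along the segment [0,z] is parametrized by xi = s z, s in [0,1]. *)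
Definition cesaro (t : R) (f : C -> C) (z : C) : C :=
  if Ceq_dec z 0 then f 0
  else Cdiv (RInt (V := C_R_CompleteNormedModule)
               (fun s : R => Cmult (Cdiv (f (Cmult (RtoC s) z))
                                    (Cminus 1 (Cmult (RtoC t) (Cmult (RtoC s) z)))) z)
               0 1) z.

(* operator norm of C_t on H^infty_v:
   sup { ||C_t f||_{infty,v} : f in H^infty_v, ||f||_{infty,v} <= 1 }
   (taken over all reals below some ||C_t f||, so that +oo values are
   not silently dropped) *)
Definition cesaro_opnorm (v : C -> R) (t : R) : Rbar :=
  Lub_Rbar (fun x => exists f, in_Hv v f /\ Rbar_le (weighted_sup v f) (Finite 1)
                             /\ Rbar_le (Finite x) (weighted_sup v (cesaro t f))).

(* Main.v *)
Require Import Defs.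
From Stdlib Require Import Reals Lra Lia ZArith.
From Coquelicot Require Import Coquelicot.
Open Scope R_scope.


Lemma normCR (z : C) : @norm R_AbsRing C_R_NormedModule z = Cmod z.
Proof. exact (eq_sym (Cmod_norm z)). Qed.

Lemma scalCR (r : R) (z : C) : @scal R_AbsRing C_R_NormedModule r z = (RtoC r * z)%C.
Proof. apply injective_projections; simpl; unfold scal; simpl; unfold mult; simpl; ring. Qed.

Lemma minusCR (y z : C) : @minus C_R_NormedModule y z = (y - z)%C.
Proof. reflexivity. Qed.
Lemma plusCR (y z : C) : @plus C_R_NormedModule y z = (y + z)%C.
Proof. reflexivity. Qed.

Lemma deriv_ext (g : C -> C) z0 : @ex_derive C_AbsRing C_NormedModule g z0 ->
  exists l : C, forall eps, 0 < eps -> exists d, 0 < d /\ forall z, Cmod (z - z0) < d ->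
    Cmod (g z - g z0 - l * (z - z0)) <= eps * Cmod (z - z0).
Proof.
  intros [l [_ Hl]]. exists l. intros eps He.
  destruct (Hl z0 (fun P H => H) (mkposreal eps He)) as [d Hd].
  exists d. split. apply cond_pos. intros z Hz.
  specialize (Hd z Hz). simpl in Hd.
  replace (l * (z - z0))%C with ((z - z0) * l)%C by ring. exact Hd.
Qed.

Lemma deriv_intro (g : C -> C) z0 (l : C) :
  (forall eps, 0 < eps -> exists d, 0 < d /\ forall z, Cmod (z - z0) < d ->
    Cmod (g z - g z0 - l * (z - z0)) <= eps * Cmod (z - z0)) ->
  @is_derive C_AbsRing C_NormedModule g z0 l.
Proof.
  intros H. split. apply is_linear_scal_l.
  intros x Hx. apply (@is_filter_lim_locally_unique C_AbsRing (AbsRing_NormedModule C_AbsRing)) in Hx. subst x.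
  intros eps. destruct (H eps (cond_pos eps)) as [d [Hd Hz]].
  exists (mkposreal d Hd). intros z Hb. specialize (Hz z Hb).
  change (Cmod (g z - g z0 - (z - z0) * l) <= eps * Cmod (z - z0))%C.
  replace ((z - z0) * l)%C with (l * (z - z0))%C by ring. exact Hz.
Qed.


Ltac Ceq := apply injective_projections; simpl; field.
Ltac Cring := apply injective_projections; simpl; ring.

Lemma cont_CR (h : R -> C) x :
  (forall eps, 0 < eps -> exists d, 0 < d /\ forall y, Rabs (y - x) < d -> Cmod (h y - h x) < eps) ->
  @continuous R_UniformSpace C_R_CompleteNormedModule h x.
Proof.
  intros H. apply (@filterlim_locally_ball_norm R_AbsRing R C_R_NormedModule).
  apply locally_filter. intros eps.
  destruct (H eps (cond_pos eps)) as [d [Hd Hy]].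
  exists (mkposreal d Hd). intros y Hb. unfold ball_norm. rewrite normCR, minusCR.
  apply Hy. exact Hb.
Qed.

Lemma ex_RInt_cont (h : R -> C) a b : a <= b ->
  (forall s, a <= s <= b -> forall eps, 0 < eps -> exists d, 0 < d /\
     forall y, Rabs (y - s) < d -> Cmod (h y - h s) < eps) ->
  @ex_RInt C_R_CompleteNormedModule h a b.
Proof.
  intros Hab H. apply ex_RInt_continuous. intros z Hz.
  rewrite Rmin_left in Hz by lra. rewrite Rmax_right in Hz by lra.
  apply cont_CR. apply H. exact Hz.
Qed.

Definition holo (g : C -> C) := forall z, Cmod z < 1 -> @ex_derive C_AbsRing C_NormedModule g z.

Lemma holo_cont g z0 : holo g -> Cmod z0 < 1 -> forall eps, 0 < eps -> exists d, 0 < d /\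
  forall z, Cmod (z - z0) < d -> Cmod (g z - g z0) < eps.
Proof.
  intros Hg Hz eps He. destruct (deriv_ext g z0 (Hg z0 Hz)) as [l Hl].
  destruct (Hl 1 Rlt_0_1) as [d [Hd Hz']].
  exists (Rmin d (eps / (Cmod l + 2))). split.
  apply Rmin_pos; auto. apply Rdiv_lt_0_compat; auto. pose proof (Cmod_ge_0 l); lra.
  intros z Hzz. assert (H1 := Hz' z (Rlt_le_trans _ _ _ Hzz (Rmin_l _ _))).
  assert (H2 := Rlt_le_trans _ _ _ Hzz (Rmin_r _ _)).
  replace (g z - g z0)%C with ((g z - g z0 - l * (z - z0)) + l * (z - z0))%C by Cring.
  eapply Rle_lt_trans. apply Cmod_triangle. rewrite Cmod_mult.
  pose proof (Cmod_ge_0 l). pose proof (Cmod_ge_0 (z - z0)).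
  apply (Rmult_lt_compat_r (Cmod l + 2)) in H2; [|lra].
  unfold Rdiv in H2. rewrite Rmult_assoc, Rinv_l, Rmult_1_r in H2 by lra.
  nra.
Qed.

Definition seg (a b : C) (s : R) : C := (a + RtoC s * (b - a))%C.
Definition integ (g : C -> C) (a b : C) (s : R) : C := (g (seg a b s) * (b - a))%C.
Definition J (g : C -> C) (a b : C) : C := RInt (V := C_R_CompleteNormedModule) (integ g a b) 0 1.
Definition Tri g a b c : C := (J g a b + J g b c + J g c a)%C.

Lemma seg_bound a b s M : Cmod a <= M -> Cmod b <= M -> 0 <= s <= 1 -> Cmod (seg a b s) <= M.
Proof.
  intros Ha Hb Hs. unfold seg.
  replace (a + RtoC s * (b - a))%C with (RtoC (1 - s) * a + RtoC s * b)%C by Cring.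
  eapply Rle_trans. apply Cmod_triangle. rewrite !Cmod_mult, !Cmod_R.
  rewrite !Rabs_pos_eq by lra. nra.
Qed.

Lemma seg_diff a b s y : (seg a b y - seg a b s = RtoC (y - s) * (b - a))%C.
Proof. unfold seg. Cring. Qed.

Lemma Cmod_lt1_max a b : Cmod a < 1 -> Cmod b < 1 -> Cmod a <= Rmax (Cmod a) (Cmod b) /\
  Cmod b <= Rmax (Cmod a) (Cmod b) /\ Rmax (Cmod a) (Cmod b) < 1.
Proof. intros. split; [apply Rmax_l|split;[apply Rmax_r|]]. apply Rmax_lub_lt; auto. Qed.

Lemma seg_disc a b s : Cmod a < 1 -> Cmod b < 1 -> 0 <= s <= 1 -> Cmod (seg a b s) < 1.
Proof.
  intros Ha Hb Hs. destruct (Cmod_lt1_max a b Ha Hb) as [H1 [H2 H3]].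
  eapply Rle_lt_trans; [apply seg_bound; eauto|]. exact H3.
Qed.

Lemma integ_cont_gen (g : C -> C) a b :
  (forall z0, Cmod z0 < 1 -> forall eps, 0 < eps -> exists d, 0 < d /\
     forall z, Cmod (z - z0) < d -> Cmod (g z - g z0) < eps) ->
  Cmod a < 1 -> Cmod b < 1 ->
  forall s, 0 <= s <= 1 -> forall eps, 0 < eps -> exists d, 0 < d /\
     forall y, Rabs (y - s) < d -> Cmod (integ g a b y - integ g a b s) < eps.
Proof.
  intros Hg Ha Hb s Hs eps He.
  destruct (Hg (seg a b s) (seg_disc a b s Ha Hb Hs) (eps / (Cmod (b - a) + 1))) as [d [Hd Hz]].
  apply Rdiv_lt_0_compat; auto. pose proof (Cmod_ge_0 (b - a)); lra.
  exists (d / (Cmod (b - a) + 1)). split. apply Rdiv_lt_0_compat; auto. pose proof (Cmod_ge_0 (b - a)); lra.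
  intros y Hy. unfold integ.
  replace (g (seg a b y) * (b - a) - g (seg a b s) * (b - a))%C with
    ((g (seg a b y) - g (seg a b s)) * (b - a))%C by Cring.
  rewrite Cmod_mult. pose proof (Cmod_ge_0 (b - a)) as Hba.
  assert (Hc : Cmod (seg a b y - seg a b s) < d).
  { rewrite seg_diff, Cmod_mult, Cmod_R.
    apply (Rmult_lt_compat_r (Cmod (b - a) + 1)) in Hy; [|lra].
    unfold Rdiv in Hy. rewrite Rmult_assoc, Rinv_l, Rmult_1_r in Hy by lra.
    pose proof (Rabs_pos (y - s)). nra. }
  specialize (Hz _ Hc).
  apply (Rmult_lt_compat_r (Cmod (b - a) + 1)) in Hz; [|lra].
  unfold Rdiv in Hz. rewrite Rmult_assoc, Rinv_l, Rmult_1_r in Hz by lra.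
  pose proof (Cmod_ge_0 (g (seg a b y) - g (seg a b s))). nra.
Qed.

Definition contD (g : C -> C) := forall z0, Cmod z0 < 1 -> forall eps, 0 < eps -> exists d, 0 < d /\
     forall z, Cmod (z - z0) < d -> Cmod (g z - g z0) < eps.

Lemma holo_contD g : holo g -> contD g.
Proof. intros Hg z0 Hz. apply holo_cont; auto. Qed.

Lemma integ_ex g a b u v : contD g -> Cmod a < 1 -> Cmod b < 1 -> 0 <= u <= v -> v <= 1 ->
  @ex_RInt C_R_CompleteNormedModule (integ g a b) u v.
Proof.
  intros Hg Ha Hb Huv Hv. apply ex_RInt_cont. lra. intros s Hs.
  apply integ_cont_gen; auto. lra.
Qed.


Ltac CRring := apply injective_projections; simpl; unfold plus, scal, mult, minus, opp; simpl; unfold plus, mult, opp; simpl; ring.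
Ltac CRfield := apply injective_projections; simpl; unfold plus, scal, mult, minus, opp; simpl; unfold plus, mult, opp; simpl; field.

Definition mid (a b : C) : C := (RtoC (/2) * (a + b))%C.

Lemma J_split g a b : contD g -> Cmod a < 1 -> Cmod b < 1 ->
  J g a b = (J g a (mid a b) + J g (mid a b) b)%C.
Proof.
  intros Hg Ha Hb. unfold J.
  rewrite <- (RInt_Chasles (V := C_R_CompleteNormedModule) (integ g a b) 0 (/2) 1)
    by (apply integ_ex; auto; lra).
  rewrite plusCR. f_equal.
  - pose proof (RInt_comp_lin (V := C_R_CompleteNormedModule) (integ g a b) (/2) 0 0 1) as H.
    replace (/2 * 0 + 0) with 0 in H by ring. replace (/2 * 1 + 0) with (/2) in H by ring.
    rewrite <- H by (apply integ_ex; auto; lra).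
    apply RInt_ext. intros x _. rewrite scalCR. unfold integ, seg, mid.
    replace (a + RtoC x * (RtoC (/ 2) * (a + b) - a))%C with (a + RtoC (/2 * x + 0) * (b - a))%C by Ceq.
    Ceq.
  - pose proof (RInt_comp_lin (V := C_R_CompleteNormedModule) (integ g a b) (/2) (/2) 0 1) as H.
    replace (/2 * 0 + /2) with (/2) in H by ring. replace (/2 * 1 + /2) with 1 in H by field.
    rewrite <- H by (apply integ_ex; auto; lra).
    apply RInt_ext. intros x _. rewrite scalCR. unfold integ, seg, mid.
    replace (RtoC (/ 2) * (a + b) + RtoC x * (b - RtoC (/ 2) * (a + b)))%C with (a + RtoC (/2 * x + /2) * (b - a))%C by Ceq.
    Ceq.
Qed.

Lemma J_rev g a b : contD g -> Cmod a < 1 -> Cmod b < 1 -> J g b a = (- J g a b)%C.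
Proof.
  intros Hg Ha Hb. unfold J.
  assert (E : @ex_RInt C_R_CompleteNormedModule (integ g a b) 0 1) by (apply integ_ex; auto; lra).
  assert (E' : @ex_RInt C_R_CompleteNormedModule (integ g a b) 1 0) by (apply ex_RInt_swap; exact E).
  pose proof (RInt_comp_lin (V := C_R_CompleteNormedModule) (integ g a b) (-1) 1 0 1) as H.
  replace (-1 * 0 + 1) with 1 in H by ring. replace (-1 * 1 + 1) with 0 in H by ring.
  specialize (H E').
  pose proof (opp_RInt_swap (V := C_R_CompleteNormedModule) (integ g a b) 0 1 E) as H2.
  transitivity (@opp C_R_CompleteNormedModule (RInt (V := C_R_CompleteNormedModule) (integ g a b) 0 1)); [|reflexivity].
  rewrite H2, <- H.
  apply (RInt_ext (V := C_R_CompleteNormedModule)). intros x _. rewrite scalCR. unfold integ, seg.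
  replace (b + RtoC x * (a - b))%C with (a + RtoC (-1 * x + 1) * (b - a))%C by Cring.
  Cring.
Qed.

Lemma is_RInt_lin_s (w : C) : is_RInt (V := C_R_CompleteNormedModule) (fun s => scal s w) 0 1 (RtoC (/2) * w)%C.
Proof.
  assert (H := is_RInt_derive (V := C_R_CompleteNormedModule) (fun s => scal (s * s / 2) w) (fun s => scal s w) 0 1).
  replace (RtoC (/2) * w)%C with (minus (scal (1 * 1 / 2) w) (scal (0 * 0 / 2) w)).
  apply H.
  - intros x _. apply (is_derive_scal_l (K := R_AbsRing) (V := C_R_NormedModule) (fun s => s * s / 2) x x w).
    auto_derive; [exact I| field].
  - intros x _. apply (continuous_scal_l (U:=R_UniformSpace) (K:=R_AbsRing) (V:=C_R_NormedModule) (fun s => s) w x). apply continuous_id.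
  - rewrite minusCR, !scalCR. Ceq.
Qed.

Lemma RInt_lin_s (w : C) : RInt (V := C_R_CompleteNormedModule) (fun s => scal s w) 0 1 = (RtoC (/2) * w)%C.
Proof. apply is_RInt_unique. apply is_RInt_lin_s. Qed.

Lemma J_affine (al be : C) a b : J (fun w => al + be * w)%C a b = (al * (b - a) + RtoC (/2) * be * (b * b - a * a))%C.
Proof.
  unfold J, integ.
  transitivity (RInt (V := C_R_CompleteNormedModule) (fun s => @plus C_R_CompleteNormedModule (scal s (be * (b - a) * (b - a))%C) ((al + be * a) * (b - a))%C) 0 1).
  apply (RInt_ext (V := C_R_CompleteNormedModule)). intros x _. unfold seg. CRring.
  rewrite (RInt_plus (V := C_R_CompleteNormedModule)). rewrite RInt_lin_s, RInt_const. CRfield.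
  eexists. apply is_RInt_lin_s.
  apply ex_RInt_const.
Qed.

Lemma Tri_affine al be a b c : Tri (fun w => al + be * w)%C a b c = 0%C.
Proof. unfold Tri. rewrite !J_affine. ring. Qed.

Lemma contD_affine al be : contD (fun w => al + be * w)%C.
Proof.
  intros z0 _ eps He. exists (eps / (Cmod be + 1)). split.
  apply Rdiv_lt_0_compat; auto. pose proof (Cmod_ge_0 be); lra.
  intros z Hz. replace (al + be * z - (al + be * z0))%C with (be * (z - z0))%C by Cring.
  rewrite Cmod_mult. pose proof (Cmod_ge_0 be). pose proof (Cmod_ge_0 (z - z0)).
  apply (Rmult_lt_compat_r (Cmod be + 1)) in Hz; [|lra].
  unfold Rdiv in Hz. rewrite Rmult_assoc, Rinv_l, Rmult_1_r in Hz by lra. nra.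
Qed.

Lemma J_minus g1 g2 a b : contD g1 -> contD g2 -> Cmod a < 1 -> Cmod b < 1 ->
  J (fun w => g1 w - g2 w)%C a b = (J g1 a b - J g2 a b)%C.
Proof.
  intros H1 H2 Ha Hb. unfold J.
  transitivity (RInt (V := C_R_CompleteNormedModule) (fun s => @minus C_R_CompleteNormedModule (integ g1 a b s) (integ g2 a b s)) 0 1).
  apply (RInt_ext (V := C_R_CompleteNormedModule)). intros x _. unfold integ. CRring.
  rewrite (RInt_minus (V := C_R_CompleteNormedModule)). reflexivity.
  apply integ_ex; auto; lra. apply integ_ex; auto; lra.
Qed.

Lemma J_bound g a b K : @ex_RInt C_R_CompleteNormedModule (integ g a b) 0 1 ->
  (forall s, 0 <= s <= 1 -> Cmod (g (seg a b s)) <= K) -> Cmod (J g a b) <= K * Cmod (b - a).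
Proof.
  intros He Hb. unfold J.
  assert (H := norm_RInt_le (V := C_R_NormedModule) (integ g a b) (fun _ => K * Cmod (b - a)) 0 1
     (RInt (V := C_R_CompleteNormedModule) (integ g a b) 0 1) (scal (1 - 0) (K * Cmod (b - a)))).
  rewrite normCR in H.
  replace (K * Cmod (b - a)) with (scal (1 - 0) (K * Cmod (b - a))).
  apply H. lra.
  intros x Hx. rewrite normCR. unfold integ. rewrite Cmod_mult.
  apply Rmult_le_compat_r. apply Cmod_ge_0. apply Hb; auto.
  apply (RInt_correct (V := C_R_CompleteNormedModule)). exact He.
  apply (is_RInt_const (V := R_NormedModule)).
  unfold scal; simpl; unfold mult; simpl. ring.
Qed.

Lemma mid_seg a b : mid a b = seg a b (/2).
Proof. unfold mid, seg. Ceq. Qed.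

Lemma mid_disc a b : Cmod a < 1 -> Cmod b < 1 -> Cmod (mid a b) < 1.
Proof. intros. rewrite mid_seg. apply seg_disc; auto; lra. Qed.

Lemma Tri_sub g a b c : contD g -> Cmod a < 1 -> Cmod b < 1 -> Cmod c < 1 ->
  Tri g a b c = (Tri g a (mid a b) (mid c a) + Tri g (mid a b) b (mid b c)
     + Tri g (mid c a) (mid b c) c + Tri g (mid a b) (mid b c) (mid c a))%C.
Proof.
  intros Hg Ha Hb Hc. unfold Tri.
  pose proof (mid_disc a b Ha Hb). pose proof (mid_disc b c Hb Hc). pose proof (mid_disc c a Hc Ha).
  rewrite (J_split g a b), (J_split g b c), (J_split g c a) by auto.
  rewrite (J_rev g (mid a b) (mid c a)), (J_rev g (mid a b) (mid b c)), (J_rev g (mid b c) (mid c a)) by auto.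
  ring.
Qed.



Lemma real_lim (x : nat -> R) (B : nat -> R) :
  (forall n m, (n <= m)%nat -> Rabs (x m - x n) <= B n) ->
  (forall eps, 0 < eps -> exists N, B N < eps) ->
  exists l, forall n, Rabs (l - x n) <= B n.
Proof.
  intros Hx HB.
  assert (Hc : ex_lim_seq_cauchy x).
  { intros eps. destruct (HB (eps / 2)) as [N HN]. pose proof (cond_pos eps); lra.
    exists N. intros n m Hn Hm.
    pose proof (Hx N n Hn). pose proof (Hx N m Hm).
    replace (x n - x m) with ((x n - x N) - (x m - x N)) by ring.
    eapply Rle_lt_trans. apply Rabs_triang. rewrite Rabs_Ropp. lra. }
  apply ex_lim_seq_cauchy_corr in Hc. destruct Hc as [l Hl].
  exists l. intros n.
  assert (H1 : is_lim_seq (fun m => Rabs (x m - x n)) (Rabs (l - x n))).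
  { apply (is_lim_seq_abs _ (Finite (l - x n))). apply is_lim_seq_minus'. exact Hl. apply is_lim_seq_const. }
  assert (H2 := is_lim_seq_le_loc (fun m => Rabs (x m - x n)) (fun _ => B n) _ _
     (ex_intro _ n (fun m Hm => Hx n m Hm)) H1 (is_lim_seq_const (B n))).
  exact H2.
Qed.

Lemma pow2_gt (n : nat) : INR n < 2 ^ n.
Proof.
  induction n. simpl. lra. rewrite S_INR. simpl.
  assert (1 <= 2 ^ n) by (apply pow_R1_Rle; lra). lra.
Qed.

Lemma small_h (K : R) (eps : R) : 0 < eps -> exists n, K * / 2 ^ n < eps.
Proof.
  intros He. destruct (archimed (Rabs K / eps)) as [H1 _].
  assert (Hz : (0 <= up (Rabs K / eps))%Z).
  { apply le_IZR. pose proof (Rabs_pos K). assert (0 <= Rabs K / eps) by (apply Rdiv_le_0_compat; lra). lra. }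
  exists (Z.to_nat (up (Rabs K / eps))).
  pose proof (pow2_gt (Z.to_nat (up (Rabs K / eps)))) as H2.
  rewrite INR_IZR_INZ, Z2Nat.id in H2 by exact Hz.
  assert (Hp : 0 < 2 ^ Z.to_nat (up (Rabs K / eps))) by (apply pow_lt; lra).
  apply (Rmult_lt_reg_r (2 ^ Z.to_nat (up (Rabs K / eps)))); auto.
  rewrite Rmult_assoc, Rinv_l, Rmult_1_r by lra.
  apply Rle_lt_trans with (Rabs K). apply Rle_abs.
  apply (Rmult_lt_compat_l eps) in H2; auto.
  assert (Rabs K / eps * eps = Rabs K) by (field; lra). nra.
Qed.

Record trg := mk { va : C; vb : C; vc : C }.

Definition TT g t := Tri g (va t) (vb t) (vc t).
Definition per t := Cmod (vb t - va t) + Cmod (vc t - vb t) + Cmod (va t - vc t).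
Definition inM (M : R) t := Cmod (va t) <= M /\ Cmod (vb t) <= M /\ Cmod (vc t) <= M.

Definition s1 t := mk (va t) (mid (va t) (vb t)) (mid (vc t) (va t)).
Definition s2 t := mk (mid (va t) (vb t)) (vb t) (mid (vb t) (vc t)).
Definition s3 t := mk (mid (vc t) (va t)) (mid (vb t) (vc t)) (vc t).
Definition s4 t := mk (mid (va t) (vb t)) (mid (vb t) (vc t)) (mid (vc t) (va t)).

Definition step g t :=
  let N := Cmod (TT g t) / 4 in
  if Rle_dec N (Cmod (TT g (s1 t))) then s1 t
  else if Rle_dec N (Cmod (TT g (s2 t))) then s2 t
  else if Rle_dec N (Cmod (TT g (s3 t))) then s3 t
  else s4 t.

Lemma Cmod_half z : Cmod (RtoC (/2) * z) = Cmod z / 2.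
Proof. rewrite Cmod_mult, Cmod_R, Rabs_pos_eq by lra. field. Qed.

Lemma mid_bound a b M : Cmod a <= M -> Cmod b <= M -> Cmod (mid a b) <= M.
Proof. intros. rewrite mid_seg. apply seg_bound; auto; lra. Qed.

Lemma sub_props M t t' : inM M t -> (t' = s1 t \/ t' = s2 t \/ t' = s3 t \/ t' = s4 t) ->
  inM M t' /\ per t' = per t / 2 /\ Cmod (va t' - va t) <= per t.
Proof.
  intros [Ha [Hb Hc]] Ht. destruct t as [a b c]. unfold inM, per in *. simpl in *.
  assert (E1 : (mid a b - a = RtoC (/2) * (b - a))%C) by (unfold mid; Ceq).
  assert (E2 : (mid c a - mid a b = RtoC (/2) * (c - b))%C) by (unfold mid; Ceq).
  assert (E3 : (a - mid c a = RtoC (/2) * (a - c))%C) by (unfold mid; Ceq).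
  assert (E4 : (b - mid a b = RtoC (/2) * (b - a))%C) by (unfold mid; Ceq).
  assert (E5 : (mid b c - b = RtoC (/2) * (c - b))%C) by (unfold mid; Ceq).
  assert (E6 : (mid a b - mid b c = RtoC (/2) * (a - c))%C) by (unfold mid; Ceq).
  assert (E7 : (mid b c - mid c a = RtoC (/2) * (b - a))%C) by (unfold mid; Ceq).
  assert (E8 : (c - mid b c = RtoC (/2) * (c - b))%C) by (unfold mid; Ceq).
  assert (E9 : (mid c a - c = RtoC (/2) * (a - c))%C) by (unfold mid; Ceq).
  assert (E10 : (mid c a - a = RtoC (/2) * (c - a))%C) by (unfold mid; Ceq).
  assert (Hca : Cmod (c - a) = Cmod (a - c)).
  { replace (c - a)%C with (- (a - c))%C by Cring. apply Cmod_opp. }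
  pose proof (Cmod_ge_0 (b - a)). pose proof (Cmod_ge_0 (c - b)). pose proof (Cmod_ge_0 (a - c)).
  pose proof (mid_bound a b M Ha Hb). pose proof (mid_bound b c M Hb Hc). pose proof (mid_bound c a M Hc Ha).
  destruct Ht as [-> | [-> | [-> | ->]]]; simpl; (split; [repeat split; auto|]).
  - rewrite E1, E2, E3, !Cmod_half. split. field.
    replace (a - a)%C with (RtoC 0) by Cring. rewrite Cmod_0. lra.
  - rewrite E4, E5, E6, !Cmod_half. split. field. rewrite E1, Cmod_half. lra.
  - rewrite E7, E8, E9, !Cmod_half. split. field. rewrite E10, Cmod_half. lra.
  - replace (mid b c - mid a b)%C with (RtoC (/2) * (c - a))%C by (unfold mid; Ceq).
    replace (mid c a - mid b c)%C with (RtoC (/2) * (a - b))%C by (unfold mid; Ceq).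
    replace (mid a b - mid c a)%C with (RtoC (/2) * (b - c))%C by (unfold mid; Ceq).
    rewrite !Cmod_half. rewrite E1, Cmod_half.
    assert (Cmod (a - b) = Cmod (b - a)) by (replace (a - b)%C with (- (b - a))%C by Cring; apply Cmod_opp).
    assert (Cmod (b - c) = Cmod (c - b)) by (replace (b - c)%C with (- (c - b))%C by Cring; apply Cmod_opp).
    split. rewrite Hca. lra. lra.
Qed.

Lemma contD_minus g1 g2 : contD g1 -> contD g2 -> contD (fun w => g1 w - g2 w)%C.
Proof.
  intros H1 H2 z0 Hz eps He.
  destruct (H1 z0 Hz (eps/2)) as [d1 [Hd1 K1]]. lra.
  destruct (H2 z0 Hz (eps/2)) as [d2 [Hd2 K2]]. lra.
  exists (Rmin d1 d2). split. apply Rmin_pos; auto.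
  intros z Hzz. specialize (K1 z (Rlt_le_trans _ _ _ Hzz (Rmin_l _ _))).
  specialize (K2 z (Rlt_le_trans _ _ _ Hzz (Rmin_r _ _))).
  replace (g1 z - g2 z - (g1 z0 - g2 z0))%C with ((g1 z - g1 z0) + - (g2 z - g2 z0))%C by Cring.
  eapply Rle_lt_trans. apply Cmod_triangle. rewrite Cmod_opp. lra.
Qed.

Lemma step_in g t : step g t = s1 t \/ step g t = s2 t \/ step g t = s3 t \/ step g t = s4 t.
Proof.
  unfold step. destruct Rle_dec. auto. destruct Rle_dec. auto. destruct Rle_dec; auto.
Qed.

Lemma step_T g M t : contD g -> M < 1 -> inM M t -> Cmod (TT g t) / 4 <= Cmod (TT g (step g t)).
Proof.
  intros Hg HM [Ha [Hb Hc]].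
  assert (E := Tri_sub g (va t) (vb t) (vc t) Hg ltac:(lra) ltac:(lra) ltac:(lra)).
  unfold step. destruct Rle_dec as [H1|H1]. auto. destruct Rle_dec as [H2|H2]. auto.
  destruct Rle_dec as [H3|H3]. auto.
  unfold TT in *. unfold s1, s2, s3, s4 in *. simpl in *. rewrite E in *.
  set (A1 := Tri g (va t) (mid (va t) (vb t)) (mid (vc t) (va t))) in *.
  set (A2 := Tri g (mid (va t) (vb t)) (vb t) (mid (vb t) (vc t))) in *.
  set (A3 := Tri g (mid (vc t) (va t)) (mid (vb t) (vc t)) (vc t)) in *.
  set (A4 := Tri g (mid (va t) (vb t)) (mid (vb t) (vc t)) (mid (vc t) (va t))) in *.
  assert (Cmod (A1 + A2 + A3 + A4) <= Cmod A1 + Cmod A2 + Cmod A3 + Cmod A4).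
  { eapply Rle_trans. apply Cmod_triangle. eapply Rplus_le_compat_r.
    eapply Rle_trans. apply Cmod_triangle. eapply Rplus_le_compat_r. apply Cmod_triangle. }
  lra.
Qed.

Definition seqT g t0 n := Nat.iter n (step g) t0.

Lemma seqT_props g M t0 : contD g -> M < 1 -> inM M t0 -> forall n,
  inM M (seqT g t0 n) /\ per (seqT g t0 n) = per t0 * / 2 ^ n /\
  Cmod (TT g t0) * (/ 2 ^ n * / 2 ^ n) <= Cmod (TT g (seqT g t0 n)) /\
  Cmod (va (seqT g t0 (S n)) - va (seqT g t0 n)) <= per t0 * / 2 ^ n.
Proof.
  intros Hg HM H0. induction n as [|n IH].
  - simpl. destruct (sub_props M t0 (step g t0) H0 (step_in g t0)) as [_ [_ H3]].
    rewrite Rinv_1, !Rmult_1_r. repeat split; try apply H0; try lra.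
  - destruct IH as [I1 [I2 [I3 I4]]].
    assert (Hs : seqT g t0 (S n) = step g (seqT g t0 n)) by reflexivity.
    destruct (sub_props M _ _ I1 (step_in g (seqT g t0 n))) as [P1 [P2 P3]].
    rewrite <- Hs in P1, P2, P3.
    assert (Hs2 : seqT g t0 (S (S n)) = step g (seqT g t0 (S n))) by reflexivity.
    destruct (sub_props M _ _ P1 (step_in g (seqT g t0 (S n)))) as [Q1 [Q2 Q3]].
    rewrite <- Hs2 in Q3.
    assert (Hp : 0 < 2 ^ n) by (apply pow_lt; lra).
    simpl pow. rewrite Rinv_mult.
    split. exact P1. split. rewrite P2, I2. field. lra.
    split.
    + pose proof (step_T g M (seqT g t0 n) Hg HM I1). rewrite <- Hs in H.
      eapply Rle_trans; [|exact H].
      replace (Cmod (TT g t0) * (/ 2 * / 2 ^ n * (/ 2 * / 2 ^ n))) with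
        (Cmod (TT g t0) * (/ 2 ^ n * / 2 ^ n) / 4) by (field; lra). lra.
    + rewrite Q3, P2, I2. right. field. lra.
Qed.

Lemma seq_cauchy (u : nat -> C) (K : R) : 0 <= K ->
  (forall n, Cmod (u (S n) - u n) <= K * / 2 ^ n) ->
  forall n m, (n <= m)%nat -> Cmod (u m - u n) <= 2 * K * / 2 ^ n.
Proof.
  intros HK Hu n m Hnm.
  assert (H : forall k, Cmod (u (n + k)%nat - u n) <= 2 * K * (/ 2 ^ n - / 2 ^ (n + k))).
  { induction k.
    - rewrite Nat.add_0_r. replace (u n - u n)%C with (RtoC 0) by Cring. rewrite Cmod_0. lra.
    - replace (u (n + S k)%nat - u n)%C with ((u (S (n + k)) - u (n + k)%nat) + (u (n + k)%nat - u n))%C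
        by (rewrite Nat.add_succ_r; Cring).
      eapply Rle_trans. apply Cmod_triangle.
      rewrite Nat.add_succ_r. simpl pow.
      assert (0 < 2 ^ (n + k)) by (apply pow_lt; lra).
      assert (0 < 2 ^ n) by (apply pow_lt; lra).
      specialize (Hu (n + k)%nat).
      replace (2 * K * (/ 2 ^ n - / (2 * 2 ^ (n + k)))) with
        (2 * K * (/ 2 ^ n - / 2 ^ (n + k)) + K * / 2 ^ (n + k)) by (field; repeat split; lra).
      lra. }
  replace m with (n + (m - n))%nat by lia.
  eapply Rle_trans. apply H.
  assert (0 < / 2 ^ (n + (m - n))) by (apply Rinv_0_lt_compat, pow_lt; lra). nra.
Qed.

Lemma Cmod_le_2max (z : C) B : Rabs (fst z) <= B -> Rabs (snd z) <= B -> Cmod z <= 2 * B.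
Proof.
  intros H1 H2. eapply Rle_trans. apply Cmod_2Rmax.
  assert (Rmax (Rabs (fst z)) (Rabs (snd z)) <= B) by (apply Rmax_lub; auto).
  assert (0 <= Rmax (Rabs (fst z)) (Rabs (snd z))) by (eapply Rle_trans; [apply Rabs_pos|apply Rmax_l]).
  assert (sqrt 2 < 2).
  { rewrite <- sqrt_Rsqr with (x := 2) at 2 by lra. apply sqrt_lt_1_alt. unfold Rsqr. lra. }
  nra.
Qed.

Lemma seg_shift x y s : (seg x y s - x = seg (x - x) (y - x) s)%C.
Proof. unfold seg. Cring. Qed.

Theorem goursat g a b c : holo g -> Cmod a < 1 -> Cmod b < 1 -> Cmod c < 1 -> Tri g a b c = RtoC 0.
Proof.
  intros Hh Ha Hb Hc. pose proof (holo_contD g Hh) as Hg.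
  set (M := Rmax (Cmod a) (Rmax (Cmod b) (Cmod c))).
  assert (HM : M < 1) by (unfold M; repeat apply Rmax_lub_lt; auto).
  set (t0 := mk a b c).
  assert (H0 : inM M t0).
  { unfold inM, t0, M; simpl. split. apply Rmax_l. split.
    eapply Rle_trans; [apply Rmax_l|apply Rmax_r]. eapply Rle_trans; [apply Rmax_r|apply Rmax_r]. }
  destruct (Req_dec (Cmod (Tri g a b c)) 0) as [Hz|Hnz]. apply Cmod_eq_0. exact Hz.
  exfalso.
  set (eta := Cmod (Tri g a b c)).
  assert (Heta : 0 < eta) by (pose proof (Cmod_ge_0 (Tri g a b c)); unfold eta; lra).
  set (P := per t0 + 1).
  assert (HP0 : 0 <= per t0) by (unfold per; pose proof (Cmod_ge_0 (vb t0 - va t0));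
    pose proof (Cmod_ge_0 (vc t0 - vb t0)); pose proof (Cmod_ge_0 (va t0 - vc t0)); lra).
  assert (HP : 0 < P) by (unfold P; lra).
  pose proof (seqT_props g M t0 Hg HM H0) as SP.
  set (u := fun n => va (seqT g t0 n)).
  assert (Hcau := seq_cauchy u P (Rlt_le _ _ HP)).
  assert (Hcau' : forall n m, (n <= m)%nat -> Cmod (u m - u n) <= 2 * P * / 2 ^ n).
  { apply Hcau. intros n. destruct (SP n) as [_ [_ [_ H4]]]. unfold u. eapply Rle_trans. exact H4.
    apply Rmult_le_compat_r. apply Rlt_le, Rinv_0_lt_compat, pow_lt; lra. unfold P; lra. }
  assert (Hsm : forall eps, 0 < eps -> exists N, 2 * P * / 2 ^ N < eps) by (intros; apply small_h; auto).
  destruct (real_lim (fun n => fst (u n)) (fun n => 2 * P * / 2 ^ n)) as [lx Hlx]; auto.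
  { intros n m Hnm. eapply Rle_trans; [|apply (Hcau' n m Hnm)]. apply (re_le_Cmod ((u m - u n)%C)). }
  destruct (real_lim (fun n => snd (u n)) (fun n => 2 * P * / 2 ^ n)) as [ly Hly]; auto.
  { intros n m Hnm. eapply Rle_trans; [|apply (Hcau' n m Hnm)]. eapply Rle_trans; [apply (Rmax_r (Rabs (fst ((u m - u n)%C))))|apply (Rmax_Cmod ((u m - u n)%C))]. }
  set (p := (lx, ly) : C).
  assert (Hp : forall n, Cmod (p - u n) <= 2 * (2 * P * / 2 ^ n)).
  { intros n. apply Cmod_le_2max; simpl. apply (Hlx n). apply (Hly n). }
  assert (HpM : Cmod p < 1).
  { destruct (Rle_dec (Cmod p) M) as [Hle|Hgt]. lra. exfalso.
    destruct (small_h (4 * P) (Cmod p - M)) as [n Hn]. lra.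
    assert (Cmod p <= Cmod (p - u n) + Cmod (u n)).
    { replace p with ((p - u n) + u n)%C at 1 by Cring. apply Cmod_triangle. }
    destruct (SP n) as [[I1 _] _]. specialize (Hp n). unfold u in *. lra. }
  destruct (deriv_ext g p (Hh p HpM)) as [l Hl].
  set (eps := eta / (10 * P * P)).
  assert (Heps : 0 < eps) by (unfold eps; apply Rdiv_lt_0_compat; nra).
  destruct (Hl eps Heps) as [d [Hd Hld]].
  destruct (small_h (5 * P) d Hd) as [n Hn].
  destruct (SP n) as [[I1 [I2 I3]] [Iper [ITT _]]].
  set (t := seqT g t0 n) in *.
  set (hn := / 2 ^ n) in *.
  assert (Hhn : 0 < hn) by (unfold hn; apply Rinv_0_lt_compat, pow_lt; lra).
  set (A := (fun w => (g p - l * p) + l * w)%C).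
  assert (HA : contD A) by apply contD_affine.
  assert (HgA : contD (fun w => g w - A w)%C) by (apply contD_minus; auto).
  assert (Hvert : forall w, Cmod w <= M -> Cmod (w - va t) <= per t -> Cmod (w - p) <= 5 * P * hn).
  { intros w _ Hw. replace (w - p)%C with ((w - va t) + - (p - va t))%C by Cring.
    eapply Rle_trans. apply Cmod_triangle. rewrite Cmod_opp.
    specialize (Hp n). fold hn in Hp. unfold u in Hp. fold t in Hp.
    assert (per t <= P * hn) by (rewrite Iper; unfold P; apply Rmult_le_compat_r; lra). lra. }
  assert (Hper : per t <= P * hn) by (rewrite Iper; unfold P; apply Rmult_le_compat_r; lra).
  assert (Hedge : forall e1 e2, Cmod e1 <= M -> Cmod e2 <= M -> Cmod (e1 - va t) <= per t ->
     Cmod (e2 - va t) <= per t ->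
     Cmod (J (fun w => g w - A w)%C e1 e2) <= eps * (5 * P * hn) * Cmod (e2 - e1)).
  { intros e1 e2 He1 He2 Hd1 Hd2. apply J_bound.
    apply integ_ex; auto; lra.
    intros s Hs. set (w := seg e1 e2 s).
    assert (Hw1 : Cmod w <= M) by (apply seg_bound; auto).
    assert (Hw2 : Cmod (w - va t) <= per t).
    { unfold w. replace (seg e1 e2 s - va t)%C with (seg (e1 - va t) (e2 - va t) s) by (unfold seg; Cring).
      apply seg_bound; auto. }
    assert (Hw3 := Hvert w Hw1 Hw2).
    assert (Hw4 := Hld w ltac:(lra)).
    replace (g w - A w)%C with (g w - g p - l * (w - p))%C by (unfold A; Cring).
    eapply Rle_trans. exact Hw4. apply Rmult_le_compat_l; lra. }
  assert (HxM : Cmod (va t) <= M) by apply I1.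
  assert (HyM : Cmod (vb t) <= M) by apply I2.
  assert (HzM : Cmod (vc t) <= M) by apply I3.
  assert (Dxx : Cmod (va t - va t) <= per t).
  { replace (va t - va t)%C with (RtoC 0) by Cring. rewrite Cmod_0. unfold per.
    pose proof (Cmod_ge_0 (vb t - va t)); pose proof (Cmod_ge_0 (vc t - vb t)); pose proof (Cmod_ge_0 (va t - vc t)); lra. }
  assert (Dyx : Cmod (vb t - va t) <= per t).
  { unfold per. pose proof (Cmod_ge_0 (vc t - vb t)); pose proof (Cmod_ge_0 (va t - vc t)); lra. }
  assert (Dzx : Cmod (vc t - va t) <= per t).
  { replace (vc t - va t)%C with (- (va t - vc t))%C by Cring. rewrite Cmod_opp. unfold per.
    pose proof (Cmod_ge_0 (vc t - vb t)); pose proof (Cmod_ge_0 (vb t - va t)); lra. }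
  assert (Eq : TT g t = Tri (fun w => g w - A w)%C (va t) (vb t) (vc t)).
  { unfold Tri. rewrite !J_minus by (auto; lra).
    pose proof (Tri_affine (g p - l * p)%C l (va t) (vb t) (vc t)) as HT. unfold Tri in HT. fold A in HT.
    unfold TT, Tri. 
    replace (J g (va t) (vb t) + J g (vb t) (vc t) + J g (vc t) (va t))%C with
      ((J g (va t) (vb t) - J A (va t) (vb t) + (J g (vb t) (vc t) - J A (vb t) (vc t)) +
       (J g (vc t) (va t) - J A (vc t) (va t))) + (J A (va t) (vb t) + J A (vb t) (vc t) + J A (vc t) (va t)))%C
      by ring.
    rewrite HT. ring. }
  assert (Hbound : Cmod (TT g t) <= eps * (5 * P * hn) * per t).
  { rewrite Eq. unfold Tri, per.
    pose proof (Hedge (va t) (vb t) HxM HyM Dxx Dyx).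
    pose proof (Hedge (vb t) (vc t) HyM HzM Dyx Dzx).
    pose proof (Hedge (vc t) (va t) HzM HxM Dzx Dxx).
    eapply Rle_trans. apply Cmod_triangle. eapply Rle_trans. apply Rplus_le_compat_r. apply Cmod_triangle.
    lra. }
  assert (HTT : TT g t0 = Tri g a b c) by reflexivity. rewrite HTT in ITT. fold eta in ITT.
  assert (Hfin : eta * (hn * hn) <= eps * (5 * P * hn) * (P * hn)).
  { eapply Rle_trans. exact ITT. eapply Rle_trans. exact Hbound. apply Rmult_le_compat_l; auto.
    apply Rmult_le_pos; [lra|]. apply Rmult_le_pos; lra. }
  assert (Heq : eps * (5 * P * hn) * (P * hn) = eta / 2 * (hn * hn)) by (unfold eps; field; lra).
  rewrite Heq in Hfin. assert (0 < hn * hn) by nra. nra.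
Qed.



Lemma J_const g0 a b : J (fun w => g0 + 0 * w)%C a b = (g0 * (b - a))%C.
Proof. rewrite J_affine. ring. Qed.

Lemma prim_diff g z0 : holo g -> Cmod z0 < 1 ->
  @is_derive C_AbsRing C_NormedModule (fun z => J g (RtoC 0) z) z0 (g z0).
Proof.
  intros Hh Hz0. pose proof (holo_contD g Hh) as Hg.
  apply deriv_intro. intros eps He.
  destruct (holo_cont g z0 Hh Hz0 eps He) as [d1 [Hd1 Hc]].
  exists (Rmin d1 (1 - Cmod z0)). split. apply Rmin_pos; lra.
  intros z Hz. assert (Hz1 := Rlt_le_trans _ _ _ Hz (Rmin_l _ _)).
  assert (Hz2 := Rlt_le_trans _ _ _ Hz (Rmin_r _ _)).
  assert (Hzd : Cmod z < 1).
  { replace z with ((z - z0) + z0)%C by Cring. eapply Rle_lt_trans. apply Cmod_triangle. lra. }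
  assert (H0 : Cmod (RtoC 0) < 1) by (rewrite Cmod_0; lra).
  pose proof (goursat g (RtoC 0) z0 z Hh H0 Hz0 Hzd) as Hgo. unfold Tri in Hgo.
  rewrite (J_rev g (RtoC 0) z) in Hgo by auto.
  assert (E1 : (J g (RtoC 0) z - J g (RtoC 0) z0 = J g z0 z)%C).
  { replace (J g z0 z) with ((J g 0 z0 + J g z0 z + - J g 0 z) + (J g 0 z - J g 0 z0))%C by ring.
    rewrite Hgo. ring. }
  rewrite E1.
  rewrite <- (J_const (g z0)).
  rewrite <- J_minus by (auto; apply contD_affine).
  apply J_bound.
  { apply integ_ex; auto; try lra. apply contD_minus; auto; apply contD_affine. }
  intros s Hs. replace (g (seg z0 z s) - (g z0 + 0 * seg z0 z s))%C with (g (seg z0 z s) - g z0)%C by Cring.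
  apply Rlt_le. apply Hc.
  replace (seg z0 z s - z0)%C with (RtoC s * (z - z0))%C by (unfold seg; Cring).
  rewrite Cmod_mult, Cmod_R, Rabs_pos_eq by lra.
  pose proof (Cmod_ge_0 (z - z0)). nra.
Qed.

Lemma Cinv_deriv y0 : y0 <> RtoC 0 -> @is_derive C_AbsRing C_NormedModule Cinv y0 (- / (y0 * y0))%C.
Proof.
  intros Hy. apply deriv_intro. intros eps He.
  assert (Hm : 0 < Cmod y0) by (apply Cmod_gt_0; auto).
  exists (Rmin (Cmod y0 / 2) (eps * (Cmod y0 * Cmod y0 * Cmod y0) / 2)). split.
  apply Rmin_pos. lra. apply Rdiv_lt_0_compat; [|lra]. apply Rmult_lt_0_compat; auto.
  apply Rmult_lt_0_compat; auto. apply Rmult_lt_0_compat; auto.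
  intros z Hz. assert (Hz1 := Rlt_le_trans _ _ _ Hz (Rmin_l _ _)).
  assert (Hz2 := Rlt_le_trans _ _ _ Hz (Rmin_r _ _)).
  assert (Hzm : Cmod y0 / 2 <= Cmod z).
  { assert (Cmod y0 <= Cmod z + Cmod (z - y0)).
    { replace y0 with (z + - (z - y0))%C at 1 by Cring. eapply Rle_trans. apply Cmod_triangle. rewrite Cmod_opp. lra. }
    lra. }
  assert (Hz0 : z <> RtoC 0) by (apply Cmod_gt_0; lra).
  replace (/ z - / y0 - - / (y0 * y0) * (z - y0))%C with ((z - y0) * (z - y0) * / (z * (y0 * y0)))%C
    by (field; split; auto).
  assert (Hnz : (z * (y0 * y0))%C <> RtoC 0).
  { apply Cmod_gt_0. rewrite !Cmod_mult. apply Rmult_lt_0_compat. lra. nra. }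
  rewrite !Cmod_mult, Cmod_inv by exact Hnz. rewrite !Cmod_mult.
  set (e := Cmod (z - y0)) in *. assert (0 <= e) by apply Cmod_ge_0.
  set (m := Cmod y0) in *. set (w := Cmod z) in *.
  assert (0 < w * (m * m)) by (apply Rmult_lt_0_compat; nra).
  apply (Rmult_le_reg_r (w * (m * m))); auto.
  rewrite Rmult_assoc, Rinv_l, Rmult_1_r by lra.
  assert (e * e <= e * (eps * (m * m * m) / 2)) by (apply Rmult_le_compat_l; lra).
  assert (m * m * m * eps * e / 2 <= eps * e * (w * (m * m))).
  { assert (m * m * m / 2 <= w * (m * m)) by nra.
    assert (0 <= eps * e) by nra. nra. }
  nra.
Qed.

Definition gf (t : R) (f : C -> C) (w : C) : C := (f w / (1 - RtoC t * w))%C.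

Lemma conv_der (f : C -> C) z l : @is_derive C_AbsRing (AbsRing_NormedModule C_AbsRing) f z l ->
  @is_derive C_AbsRing C_NormedModule f z l.
Proof.
  intros [_ Hl]. apply deriv_intro. intros eps He.
  destruct (Hl z (fun P H => H) (mkposreal eps He)) as [d Hd].
  exists d. split. apply cond_pos. intros y Hy.
  specialize (Hd y Hy). simpl in Hd.
  replace (l * (y - z))%C with ((y - z) * l)%C by ring. exact Hd.
Qed.
Lemma conv_der' (f : C -> C) z l : @is_derive C_AbsRing C_NormedModule f z l ->
  @is_derive C_AbsRing (AbsRing_NormedModule C_AbsRing) f z l.
Proof.
  intros [_ Hl]. split. apply is_linear_scal_l.
  intros x Hx. apply (@is_filter_lim_locally_unique C_AbsRing (AbsRing_NormedModule C_AbsRing)) in Hx. subst x.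
  intros eps. destruct (Hl z (fun P H => H) eps) as [d Hd].
  exists d. intros y Hy. specialize (Hd y Hy). exact Hd.
Qed.

Lemma lin_deriv t w : @is_derive C_AbsRing C_NormedModule (fun x => 1 - RtoC t * x)%C w (- RtoC t)%C.
Proof.
  apply deriv_intro. intros eps He. exists 1. split. lra. intros z _.
  replace (1 - RtoC t * z - (1 - RtoC t * w) - - RtoC t * (z - w))%C with (RtoC 0) by Cring.
  rewrite Cmod_0. pose proof (Cmod_ge_0 (z - w)). nra.
Qed.

Lemma gf_holo t f : 0 < t < 1 -> holo_disc f -> holo (gf t f).
Proof.
  intros Ht Hf w Hw. destruct (Hf w Hw) as [df Hdf].
  assert (Hnz : (1 - RtoC t * w)%C <> RtoC 0).
  { intro H. assert (Cmod (RtoC t * w) < 1).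
    { rewrite Cmod_mult, Cmod_R, Rabs_pos_eq by lra. pose proof (Cmod_ge_0 w). nra. }
    replace (RtoC t * w)%C with (RtoC 1) in H0. rewrite Cmod_1 in H0; lra.
    replace (RtoC t * w)%C with (RtoC 1 - (1 - RtoC t * w))%C by Cring. rewrite H. Cring. }
  assert (H1 := is_derive_comp (K := C_AbsRing) (V := AbsRing_NormedModule C_AbsRing) Cinv (fun x => 1 - RtoC t * x)%C w _ _
     (conv_der' _ _ _ (Cinv_deriv _ Hnz)) (conv_der' _ _ _ (lin_deriv t w))).
  assert (H2 := is_derive_mult (K := C_AbsRing) f (fun x => Cinv (1 - RtoC t * x))%C w _ _ (conv_der' _ _ _ Hdf) H1 Cmult_comm).
  eexists. apply conv_der. exact H2.
Qed.

Lemma cesaro_eq t f z : z <> RtoC 0 -> cesaro t f z = (J (gf t f) (RtoC 0) z * / z)%C.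
Proof.
  intros Hz. unfold cesaro. destruct Ceq_dec as [e|_]; [contradiction|]. unfold Cdiv at 1. f_equal.
  unfold J. apply (RInt_ext (V := C_R_CompleteNormedModule)). intros s _. unfold integ, gf.
  replace (seg (RtoC 0) z s) with (RtoC s * z)%C by (unfold seg; Cring).
  replace (z - RtoC 0)%C with z by Cring. reflexivity.
Qed.

Lemma cesaro_0 t f : cesaro t f (RtoC 0) = f (RtoC 0).
Proof. unfold cesaro. destruct Ceq_dec as [_|n]; [reflexivity|]. exfalso; apply n; reflexivity. Qed.

Lemma cesaro_holo t f : 0 < t < 1 -> holo_disc f -> holo_disc (cesaro t f).
Proof.
  intros Ht Hf z0 Hz0. assert (Hg := gf_holo t f Ht Hf).
  destruct (Ceq_dec z0 (RtoC 0)) as [E|Hn].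
  - subst z0. destruct (deriv_ext _ _ (Hg (RtoC 0) Hz0)) as [l Hl].
    exists (RtoC (/2) * l)%C. apply deriv_intro. intros eps He.
    destruct (Hl eps He) as [d [Hd Hld]].
    exists (Rmin d 1). split. apply Rmin_pos; lra.
    intros z Hz. assert (Hz1 := Rlt_le_trans _ _ _ Hz (Rmin_l _ _)).
    assert (Hz2 := Rlt_le_trans _ _ _ Hz (Rmin_r _ _)).
    replace (z - RtoC 0)%C with z in * by Cring.
    destruct (Ceq_dec z (RtoC 0)) as [Ez|Nz].
    + subst z. rewrite cesaro_0. replace (f (RtoC 0) - f (RtoC 0) - RtoC (/ 2) * l * RtoC 0)%C with (RtoC 0) by Cring.
      rewrite Cmod_0. lra.
    + rewrite cesaro_eq, cesaro_0 by exact Nz.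
      assert (Hgf0 : gf t f (RtoC 0) = f (RtoC 0)).
      { unfold gf. replace (1 - RtoC t * RtoC 0)%C with (RtoC 1) by Cring. field. }
      assert (Hzp : 0 < Cmod z) by (apply Cmod_gt_0; auto).
      assert (Hzd : Cmod z < 1) by lra.
      assert (H0 : Cmod (RtoC 0) < 1) by (rewrite Cmod_0; lra).
      assert (E : (J (gf t f) (RtoC 0) z * / z - f (RtoC 0) - RtoC (/ 2) * l * z)%C =
        ((J (gf t f) (RtoC 0) z - J (fun w => (gf t f (RtoC 0) - l * RtoC 0) + l * w)%C (RtoC 0) z) * / z)%C).
      { rewrite J_affine. rewrite Hgf0. field. exact Nz. }
      rewrite E. rewrite <- (J_minus (gf t f) _ (RtoC 0) z (holo_contD _ Hg) (contD_affine _ _) H0 Hzd).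
      rewrite Cmod_mult, Cmod_inv by exact Nz.
      apply (Rmult_le_reg_r (Cmod z)); auto. rewrite Rmult_assoc, Rinv_l, Rmult_1_r by lra.
      replace (eps * Cmod z * Cmod z) with ((eps * Cmod z) * Cmod (z - RtoC 0)) by (replace (z - RtoC 0)%C with z by Cring; ring).
      apply J_bound.
      { apply integ_ex; auto; try lra. apply contD_minus. apply holo_contD; exact Hg. apply contD_affine. }
      intros s Hs. set (w := seg (RtoC 0) z s).
      assert (Hw : Cmod (w - RtoC 0) <= Cmod z).
      { unfold w, seg. replace (RtoC 0 + RtoC s * (z - RtoC 0) - RtoC 0)%C with (RtoC s * z)%C by Cring.
        rewrite Cmod_mult, Cmod_R, Rabs_pos_eq by lra. pose proof (Cmod_ge_0 z). nra. }
      replace (gf t f w - (gf t f (RtoC 0) - l * RtoC 0 + l * w))%C with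
        (gf t f w - gf t f (RtoC 0) - l * (w - RtoC 0))%C by Cring.
      eapply Rle_trans. apply Hld. lra. apply Rmult_le_compat_l; lra.
  - assert (H1 := conv_der' _ _ _ (prim_diff (gf t f) z0 Hg Hz0)).
    assert (H2 := conv_der' _ _ _ (Cinv_deriv z0 Hn)).
    assert (H3 := is_derive_mult (K := C_AbsRing) _ _ z0 _ _ H1 H2 Cmult_comm).
    eexists. apply conv_der.
    apply (is_derive_ext_loc (K := C_AbsRing) (V := AbsRing_NormedModule C_AbsRing) (fun x => mult (J (gf t f) (RtoC 0) x) (Cinv x)) (cesaro t f) z0 _ ); [|exact H3].
    assert (Hp : 0 < Cmod z0) by (apply Cmod_gt_0; auto).
    exists (mkposreal _ Hp). intros y Hy. change (Cmod (y - z0) < Cmod z0) in Hy.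
    assert (Hy0 : y <> RtoC 0).
    { intro E. subst y. replace (RtoC 0 - z0)%C with (- z0)%C in Hy by Cring. rewrite Cmod_opp in Hy. lra. }
    rewrite cesaro_eq by exact Hy0. reflexivity.
Qed.


Lemma int_log t : 0 < t < 1 -> is_RInt (fun s => / (1 - t * s)) 0 1 (- ln (1 - t) / t).
Proof.
  intros Ht.
  replace (- ln (1 - t) / t) with (minus ((fun s => - ln (1 - t * s) / t) 1) ((fun s => - ln (1 - t * s) / t) 0)).
  apply (is_RInt_derive (V := R_CompleteNormedModule) (fun s => - ln (1 - t * s) / t)).
  - intros x Hx. rewrite Rmin_left, Rmax_right in Hx by lra.
    auto_derive. nra. field. split; [nra|lra].
  - intros x Hx. rewrite Rmin_left, Rmax_right in Hx by lra.
    apply (ex_derive_continuous (K := R_AbsRing) (V := R_NormedModule)). auto_derive. nra.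
  - unfold minus, plus, opp; simpl. rewrite Rmult_0_r, Rminus_0_r, ln_1, Rmult_1_r. field. lra.
Qed.

Lemma int_pow r g : 0 < r < 1 -> 0 < g ->
  is_RInt (fun s => exp (- (g + 1) * ln (1 - s * r))) 0 1 ((exp (- g * ln (1 - r)) - 1) / (g * r)).
Proof.
  intros Hr Hg.
  replace ((exp (- g * ln (1 - r)) - 1) / (g * r)) with
    (minus ((fun s => exp (- g * ln (1 - s * r)) / (g * r)) 1) ((fun s => exp (- g * ln (1 - s * r)) / (g * r)) 0)).
  apply (is_RInt_derive (V := R_CompleteNormedModule) (fun s => exp (- g * ln (1 - s * r)) / (g * r))).
  - intros x Hx. rewrite Rmin_left, Rmax_right in Hx by lra.
    auto_derive. nra.
    replace (- (g + 1) * ln (1 - x * r)) with (- g * ln (1 - x * r) + - ln (1 - x * r)) by ring.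
    rewrite exp_plus, exp_Ropp, exp_ln by nra. replace (1 + - (x * r)) with (1 - x * r) by ring. field. split; [nra|lra].
  - intros x Hx. rewrite Rmin_left, Rmax_right in Hx by lra.
    apply (ex_derive_continuous (K := R_AbsRing) (V := R_NormedModule)). auto_derive. nra.
  - unfold minus, plus, opp; simpl. rewrite Rmult_0_l, Rminus_0_r, ln_1, Rmult_0_r, exp_0, Rmult_1_l. field. lra.
Qed.

Lemma exp_le_exp x y : x <= y -> exp x <= exp y.
Proof. intros [H|H]. left; apply exp_increasing; auto. subst; lra. Qed.

Lemma ln_le x y : 0 < x -> x <= y -> ln x <= ln y.
Proof. intros H [H1|H1]. left; apply ln_increasing; auto. subst; lra. Qed.

Lemma bern_ge1 g x : 1 <= g -> 0 < x <= 1 -> 1 - exp (g * ln x) <= g * (1 - x).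
Proof.
  intros Hg Hx. destruct (Req_dec x 1) as [E|Ne].
  - subst. rewrite ln_1, Rmult_0_r, exp_0. lra.
  - destruct (MVT_cor2 (fun y => exp (g * ln y)) (fun y => g * exp ((g - 1) * ln y)) x 1) as [c [Hc1 Hc2]].
    lra.
    + intros c Hc. apply is_derive_Reals. auto_derive. lra.
      replace (g * ln c) with ((g - 1) * ln c + ln c) by ring. rewrite exp_plus, exp_ln by lra. field. lra.
    + rewrite ln_1, Rmult_0_r, exp_0 in Hc1.
      assert (exp ((g - 1) * ln c) <= 1).
      { apply Rle_trans with (exp 0); [|rewrite exp_0; lra]. apply exp_le_exp.
        assert (ln c < 0) by (rewrite <- ln_1; apply ln_increasing; lra). assert (0 <= (g - 1) * (- ln c)) by (apply Rmult_le_pos; lra). lra. }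
      assert (0 < exp ((g - 1) * ln c)) by apply exp_pos.
      assert (1 - exp (g * ln x) = g * exp ((g - 1) * ln c) * (1 - x)) by lra.
      rewrite H1. assert (0 <= (g * (1 - x)) * (1 - exp ((g - 1) * ln c))) by (apply Rmult_le_pos; [apply Rmult_le_pos|]; lra). nra.
Qed.

Lemma pow_ge_lt1 g x : 0 < g < 1 -> 0 < x <= 1 -> x <= exp (g * ln x).
Proof.
  intros Hg Hx. rewrite <- (exp_ln x) at 1 by lra. apply exp_le_exp.
  assert (ln x <= 0) by (rewrite <- ln_1; apply ln_le; lra). assert (0 <= (1 - g) * (- ln x)) by (apply Rmult_le_pos; lra). lra.
Qed.



Lemma J_bound_fun g a b (phi : R -> R) I : @ex_RInt C_R_CompleteNormedModule (integ g a b) 0 1 ->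
  is_RInt phi 0 1 I ->
  (forall s, 0 <= s <= 1 -> Cmod (g (seg a b s)) <= phi s) -> Cmod (J g a b) <= Cmod (b - a) * I.
Proof.
  intros He Hp Hb. unfold J.
  assert (H := norm_RInt_le (V := C_R_NormedModule) (integ g a b) (fun s => Cmod (b - a) * phi s) 0 1
     (RInt (V := C_R_CompleteNormedModule) (integ g a b) 0 1) (Cmod (b - a) * I)).
  rewrite normCR in H. apply H. lra.
  intros x Hx. rewrite normCR. unfold integ. rewrite Cmod_mult, Rmult_comm.
  apply Rmult_le_compat_l. apply Cmod_ge_0. apply Hb; auto.
  apply (RInt_correct (V := C_R_CompleteNormedModule)). exact He.
  apply (is_RInt_scal (V := R_NormedModule) phi 0 1 (Cmod (b - a)) I Hp).
Qed.

Lemma v_exp g w : v_gamma g w = exp (g * ln (1 - Cmod w)).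
Proof. reflexivity. Qed.

Lemma log_ge1 t : 0 < t < 1 -> 1 <= - ln (1 - t) / t.
Proof.
  intros Ht. assert (ln (1 - t) <= - t).
  { rewrite <- (ln_exp (- t)). apply ln_le. lra. pose proof (exp_ineq1_le (- t)). lra. }
  apply (Rmult_le_reg_r t). lra. unfold Rdiv. rewrite Rmult_assoc, Rinv_l, Rmult_1_r by lra. lra.
Qed.

Section Est.
Variables (t gam M : R) (f : C -> C).
Hypotheses (Ht : 0 < t < 1) (Hg : 0 < gam) (HM : 0 <= M) (Hf : holo_disc f)
  (Hb : forall w, in_disc w -> Cmod (f w) * v_gamma gam w <= M).

Lemma f_bound w : in_disc w -> Cmod (f w) <= M / exp (gam * ln (1 - Cmod w)).
Proof.
  intros Hw. specialize (Hb w Hw). rewrite v_exp in Hb.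
  assert (0 < exp (gam * ln (1 - Cmod w))) by apply exp_pos.
  apply (Rmult_le_reg_r (exp (gam * ln (1 - Cmod w)))); auto.
  unfold Rdiv. rewrite Rmult_assoc, Rinv_l, Rmult_1_r by lra. exact Hb.
Qed.

Lemma gf_bound z s : in_disc z -> 0 <= s <= 1 ->
  Cmod (gf t f (seg (RtoC 0) z s)) <= M / exp (gam * ln (1 - s * Cmod z)) / (1 - t * s * Cmod z) /\
  0 < 1 - t * s * Cmod z.
Proof.
  intros Hz Hs. unfold in_disc in Hz. set (r := Cmod z) in *.
  assert (Hr : 0 <= r) by apply Cmod_ge_0.
  assert (Ew : seg (RtoC 0) z s = (RtoC s * z)%C) by (unfold seg; Cring).
  assert (Cw : Cmod (seg (RtoC 0) z s) = s * r) by (rewrite Ew, Cmod_mult, Cmod_R, Rabs_pos_eq by lra; reflexivity).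
  assert (Hts : 0 <= t * s <= 1) by (split; nra). assert (Htsr : t * s * r <= r) by nra. assert (Hpos : 0 < 1 - t * s * r) by lra.
  split; [|exact Hpos].
  assert (Hden : 1 - t * s * r <= Cmod (1 - RtoC t * seg (RtoC 0) z s)).
  { assert (Cmod (RtoC 1) <= Cmod (1 - RtoC t * seg (RtoC 0) z s) + Cmod (RtoC t * seg (RtoC 0) z s)).
    { replace (RtoC 1) with ((1 - RtoC t * seg (RtoC 0) z s) + RtoC t * seg (RtoC 0) z s)%C at 1 by Cring.
      apply Cmod_triangle. }
    rewrite Cmod_1, Cmod_mult, Cmod_R, Rabs_pos_eq, Cw in H by lra. lra. }
  unfold gf. rewrite Cmod_div.
  2:{ intro E. rewrite E, Cmod_0 in Hden. lra. }
  assert (Hfw := f_bound (seg (RtoC 0) z s) ltac:(unfold in_disc; rewrite Cw; nra)).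
  rewrite Cw in Hfw.
  assert (0 < exp (gam * ln (1 - s * r))) by apply exp_pos.
  assert (0 <= M / exp (gam * ln (1 - s * r))) by (apply Rdiv_le_0_compat; lra).
  unfold Rdiv at 1. unfold Rdiv at 2.
  apply Rmult_le_compat; auto. apply Cmod_ge_0.
  left; apply Rinv_0_lt_compat; lra.
  apply Rinv_le_contravar; auto.
Qed.

Lemma est_zero : Cmod (cesaro t f (RtoC 0)) * v_gamma gam (RtoC 0) <= M.
Proof.
  rewrite cesaro_0. apply Hb. unfold in_disc. rewrite Cmod_0. lra.
Qed.

Lemma J_ex z : in_disc z -> @ex_RInt C_R_CompleteNormedModule (integ (gf t f) (RtoC 0) z) 0 1.
Proof.
  intros Hz. apply integ_ex; try lra. apply holo_contD, gf_holo; auto.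
  rewrite Cmod_0; lra. exact Hz.
Qed.

Lemma est_a z : in_disc z -> Cmod (cesaro t f z) * v_gamma gam z <= M * (- ln (1 - t) / t).
Proof.
  intros Hz. pose proof (log_ge1 t Ht) as HL.
  destruct (Ceq_dec z (RtoC 0)) as [E|Nz].
  - subst z. eapply Rle_trans. apply est_zero. nra.
  - rewrite cesaro_eq by exact Nz. rewrite Cmod_mult, Cmod_inv by exact Nz.
    unfold in_disc in Hz. set (r := Cmod z) in *.
    assert (Hr : 0 < r) by (apply Cmod_gt_0; auto).
    rewrite v_exp. fold r. set (V := exp (gam * ln (1 - r))).
    assert (HV : 0 < V) by apply exp_pos.
    set (L := - ln (1 - t) / t) in *.
    assert (HJ : Cmod (J (gf t f) (RtoC 0) z) <= Cmod (z - RtoC 0) * (M / V * L)).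
    { apply (J_bound_fun _ _ _ (fun s => M / V * / (1 - t * s))). apply J_ex; exact Hz.
      apply (is_RInt_scal (V := R_NormedModule) _ 0 1 (M / V) L). apply int_log; exact Ht.
      intros s Hs. destruct (gf_bound z s Hz Hs) as [H1 H2]. fold r in H1, H2.
      eapply Rle_trans. exact H1.
      assert (HA : V <= exp (gam * ln (1 - s * r))).
      { apply exp_le_exp. apply Rmult_le_compat_l. lra. apply ln_le. lra. nra. }
      assert (Hts : 0 <= t * s) by (apply Rmult_le_pos; lra).
      assert (HB : 1 - t * s <= 1 - t * s * r).
      { assert (0 <= t * s * (1 - r)) by (apply Rmult_le_pos; lra). lra. }
      assert (HC : 0 < 1 - t * s).
      { assert (t * s <= t * 1) by (apply Rmult_le_compat_l; lra). lra. }
      unfold Rdiv. rewrite !Rmult_assoc. apply Rmult_le_compat_l. lra.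
      apply Rmult_le_compat. left; apply Rinv_0_lt_compat; apply exp_pos.
      left; apply Rinv_0_lt_compat; lra. apply Rinv_le_contravar; auto. apply Rinv_le_contravar; auto. rewrite <- Rmult_assoc; lra. }
    replace (z - RtoC 0)%C with z in HJ by Cring. fold r in HJ.
    assert (Hi : 0 < / r) by (apply Rinv_0_lt_compat; auto).
    apply Rle_trans with (r * (M / V * L) * / r * V).
    apply Rmult_le_compat_r. lra. apply Rmult_le_compat_r. lra. exact HJ.
    right. field. lra.
Qed.

Lemma est_b z : in_disc z -> Cmod (cesaro t f z) * v_gamma gam z <= M * Rmax 1 (/ gam).
Proof.
  intros Hz. assert (Hmax : 1 <= Rmax 1 (/ gam)) by apply Rmax_l.
  destruct (Ceq_dec z (RtoC 0)) as [E|Nz].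
  - subst z. eapply Rle_trans. apply est_zero. nra.
  - rewrite cesaro_eq by exact Nz. rewrite Cmod_mult, Cmod_inv by exact Nz.
    unfold in_disc in Hz. set (r := Cmod z) in *.
    assert (Hr : 0 < r) by (apply Cmod_gt_0; auto).
    rewrite v_exp. fold r. set (V := exp (gam * ln (1 - r))).
    assert (HV : 0 < V) by apply exp_pos.
    set (I := (exp (- gam * ln (1 - r)) - 1) / (gam * r)).
    assert (HJ : Cmod (J (gf t f) (RtoC 0) z) <= Cmod (z - RtoC 0) * (M * I)).
    { apply (J_bound_fun _ _ _ (fun s => M * exp (- (gam + 1) * ln (1 - s * r)))). apply J_ex; exact Hz.
      apply (is_RInt_scal (V := R_NormedModule) _ 0 1 M I). apply int_pow; auto.
      intros s Hs. destruct (gf_bound z s Hz Hs) as [H1 H2]. fold r in H1, H2.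
      eapply Rle_trans. exact H1.
      assert (Hy : 0 < 1 - s * r) by nra.
      replace (- (gam + 1) * ln (1 - s * r)) with (- (gam * ln (1 - s * r)) + - ln (1 - s * r)) by ring.
      rewrite exp_plus, !exp_Ropp, exp_ln by lra.
      assert (HB : 1 - s * r <= 1 - t * s * r).
      { assert (0 <= s * r * (1 - t)) by (apply Rmult_le_pos; [apply Rmult_le_pos|]; lra). lra. }
      unfold Rdiv. rewrite Rmult_assoc. apply Rmult_le_compat_l. lra.
      apply Rmult_le_compat_l. left; apply Rinv_0_lt_compat; apply exp_pos.
      apply Rinv_le_contravar; auto. }
    replace (z - RtoC 0)%C with z in HJ by Cring. fold r in HJ.
    assert (Hi : 0 < / r) by (apply Rinv_0_lt_compat; auto).
    apply Rle_trans with (r * (M * I) * / r * V).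
    apply Rmult_le_compat_r. lra. apply Rmult_le_compat_r. lra. exact HJ.
    assert (EI : r * (M * I) * / r * V = M * ((1 - V) / (gam * r))).
    { unfold I, V. replace (- gam * ln (1 - r)) with (- (gam * ln (1 - r))) by ring. rewrite exp_Ropp.
      assert (HVn : exp (gam * ln (1 - r)) <> 0) by (apply Rgt_not_eq, exp_pos).
      field. repeat split; try lra; auto. }
    rewrite EI. apply Rmult_le_compat_l. exact HM.
    assert (Hgr : 0 < gam * r) by nra.
    destruct (Rle_dec 1 gam) as [G1|G1].
    + assert (1 - V <= gam * r).
      { unfold V. pose proof (bern_ge1 gam (1 - r) G1 ltac:(lra)). lra. }
      apply Rle_trans with 1; auto.
      apply (Rmult_le_reg_r (gam * r)); auto. unfold Rdiv. rewrite Rmult_assoc, Rinv_l by lra. lra.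
    + assert (1 - V <= r).
      { unfold V. pose proof (pow_ge_lt1 gam (1 - r) ltac:(lra) ltac:(lra)). lra. }
      apply Rle_trans with (/ gam); [|apply Rmax_r].
      apply (Rmult_le_reg_r (gam * r)); auto. unfold Rdiv. rewrite Rmult_assoc, Rinv_l by lra.
      replace (/ gam * (gam * r)) with r by (field; lra). lra.
Qed.

End Est.


Lemma ws_ub v h : is_finite (weighted_sup v h) -> forall z, in_disc z ->
  Cmod (h z) * v z <= real (weighted_sup v h).
Proof.
  intros Hf z Hz. destruct (Lub_Rbar_correct (fun x => exists z, in_disc z /\ x = Cmod (h z) * v z)) as [ub _].
  specialize (ub _ (ex_intro _ z (conj Hz eq_refl))).
  unfold weighted_sup in *. rewrite <- Hf in ub. exact ub.
Qed.

Lemma disc0 : in_disc (RtoC 0).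
Proof. unfold in_disc. rewrite Cmod_0. lra. Qed.

Lemma ws_ge v h z : in_disc z -> Rbar_le (Finite (Cmod (h z) * v z)) (weighted_sup v h).
Proof.
  intros Hz. destruct (Lub_Rbar_correct (fun x => exists z, in_disc z /\ x = Cmod (h z) * v z)) as [ub _].
  apply ub. exists z. auto.
Qed.

Lemma ws_le v h B : (forall z, in_disc z -> Cmod (h z) * v z <= B) ->
  Rbar_le (weighted_sup v h) (Finite B) /\ is_finite (weighted_sup v h).
Proof.
  intros H.
  destruct (Lub_Rbar_correct (fun x => exists z, in_disc z /\ x = Cmod (h z) * v z)) as [_ lub].
  assert (H1 : Rbar_le (weighted_sup v h) (Finite B)).
  { apply lub. intros x [z [Hz ->]]. simpl. apply H; auto. }
  split; auto.
  pose proof (ws_ge v h (RtoC 0) disc0) as H2.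
  destruct (weighted_sup v h); simpl in *; try tauto. reflexivity.
Qed.

Lemma v_pos g z : 0 < v_gamma g z.
Proof. apply exp_pos. Qed.

Lemma v_le1 g z : 0 < g -> in_disc z -> v_gamma g z <= 1.
Proof.
  intros Hg Hz. unfold in_disc in Hz. rewrite v_exp.
  apply Rle_trans with (exp 0); [|rewrite exp_0; lra]. apply exp_le_exp.
  assert (ln (1 - Cmod z) <= 0).
  { rewrite <- ln_1. apply ln_le. lra. pose proof (Cmod_ge_0 z). lra. }
  assert (0 <= g * (- ln (1 - Cmod z))) by (apply Rmult_le_pos; lra). lra.
Qed.

Lemma v_0 g : v_gamma g (RtoC 0) = 1.
Proof. rewrite v_exp, Cmod_0, Rminus_0_r, ln_1, Rmult_0_r, exp_0. reflexivity. Qed.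

Lemma fin_real (x : Rbar) : is_finite x -> x = Finite (real x).
Proof. intros H. rewrite H. reflexivity. Qed.

Theorem proposition2p9 (t gamma : R) (ht : 0 < t < 1) (hg : 0 < gamma) :
  (forall f : C -> C, in_Hv (v_gamma gamma) f -> in_Hv (v_gamma gamma) (cesaro t f)) /\
  (1 <= gamma -> cesaro_opnorm (v_gamma gamma) t = Finite 1) /\
  (gamma < 1 -> Rbar_le (cesaro_opnorm (v_gamma gamma) t)
                        (Finite (Rmin (- ln (1 - t) / t) (1 / gamma)))).
Proof.
  assert (Common : forall f, in_Hv (v_gamma gamma) f ->
     0 <= real (weighted_sup (v_gamma gamma) f) /\
     forall w, in_disc w -> Cmod (f w) * v_gamma gamma w <= real (weighted_sup (v_gamma gamma) f)).
  { intros f [Hh Hfin]. split.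
    - eapply Rle_trans; [|apply (ws_ub _ _ Hfin (RtoC 0) disc0)].
      apply Rmult_le_pos. apply Cmod_ge_0. left; apply v_pos.
    - apply ws_ub; auto. }
  assert (HL := log_ge1 t ht).
  split; [|split].
  - intros f Hf. destruct (Common f Hf) as [HM Hb].
    split. apply cesaro_holo; auto. apply Hf.
    apply (ws_le _ _ (real (weighted_sup (v_gamma gamma) f) * (- ln (1 - t) / t))).
    intros z Hz. apply est_a; auto. apply Hf.
  - intros Hg1. apply Rbar_le_antisym.
    + destruct (Lub_Rbar_correct (fun x => exists f, in_Hv (v_gamma gamma) f /\ Rbar_le (weighted_sup (v_gamma gamma) f) (Finite 1)
                             /\ Rbar_le (Finite x) (weighted_sup (v_gamma gamma) (cesaro t f)))) as [_ lub].
      apply lub. intros x [f [Hf [H1 H2]]].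
      destruct (Common f Hf) as [HM Hb].
      set (M := real (weighted_sup (v_gamma gamma) f)) in *.
      assert (HM1 : M <= 1).
      { rewrite (fin_real _ (proj2 Hf)) in H1. exact H1. }
      assert (Hmax : Rmax 1 (/ gamma) = 1).
      { apply Rmax_left. apply Rle_trans with (/ 1). apply Rinv_le_contravar; lra. lra. }
      destruct (ws_le (v_gamma gamma) (cesaro t f) (M * Rmax 1 (/ gamma))) as [H3 _].
      { intros z Hz. apply est_b; auto. apply Hf. }
      rewrite Hmax in H3. eapply Rbar_le_trans. exact H2. eapply Rbar_le_trans. exact H3.
      simpl. lra.
    + destruct (Lub_Rbar_correct (fun x => exists f, in_Hv (v_gamma gamma) f /\ Rbar_le (weighted_sup (v_gamma gamma) f) (Finite 1)
                             /\ Rbar_le (Finite x) (weighted_sup (v_gamma gamma) (cesaro t f)))) as [ub _].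
      apply ub. exists (fun _ => RtoC 1).
      assert (Hb1 : forall z, in_disc z -> Cmod ((fun _ : C => RtoC 1) z) * v_gamma gamma z <= 1).
      { intros z Hz. simpl. rewrite Cmod_1, Rmult_1_l. apply v_le1; auto. }
      destruct (ws_le _ _ 1 Hb1) as [H1 H2].
      split. split; auto. intros z _. eexists. apply is_derive_const.
      split. exact H1.
      eapply Rbar_le_trans; [|apply (ws_ge _ _ (RtoC 0) disc0)].
      rewrite cesaro_0, Cmod_1, v_0. simpl. lra.
  - intros Hg1.
    destruct (Lub_Rbar_correct (fun x => exists f, in_Hv (v_gamma gamma) f /\ Rbar_le (weighted_sup (v_gamma gamma) f) (Finite 1)
                             /\ Rbar_le (Finite x) (weighted_sup (v_gamma gamma) (cesaro t f)))) as [_ lub].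
    apply lub. intros x [f [Hf [H1 H2]]].
    destruct (Common f Hf) as [HM Hb].
    set (M := real (weighted_sup (v_gamma gamma) f)) in *.
    assert (HM1 : M <= 1).
    { rewrite (fin_real _ (proj2 Hf)) in H1. exact H1. }
    assert (Hmax : Rmax 1 (/ gamma) = / gamma).
    { apply Rmax_right. apply Rle_trans with (/ 1). lra. apply Rinv_le_contravar; lra. }
    set (Q := Rmin (- ln (1 - t) / t) (1 / gamma)).
    assert (HQ : 0 <= Q).
    { unfold Q. apply Rmin_glb. lra. unfold Rdiv; rewrite Rmult_1_l. left; apply Rinv_0_lt_compat; lra. }
    destruct (ws_le (v_gamma gamma) (cesaro t f) (M * Q)) as [H3 _].
    { intros z Hz. unfold Q. apply Rmin_case.
      - apply est_a; auto. apply Hf.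
      - unfold Rdiv. rewrite Rmult_1_l, <- Hmax. apply est_b; auto. apply Hf. }
    eapply Rbar_le_trans. exact H2. eapply Rbar_le_trans. exact H3.
    simpl. fold Q. nra.
Qed.
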